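(* Let $m\ge2$ and $n\ge m$. For every $\epsilon$ with $0<\epsilon\le 1/2$, there is no proportional mechanism $(A,p)$ for the job scheduling problem over the set $\mathcal{C}$ of general instances with $m$ machines and $n$ jobs such that $A$ gives a $(3/2-\epsilon)$-approximation to the optimal makespan.
   Context: Notation: $[k]=\{1,\dots,k\}$. There are $m$ machines $[m]$ and $n$ jobs $[n]$. An instance is a matrix $c\in\mathbb{R}_{\ge0}^{m\times n}$; for $S\subseteq[n]$, $c_i(S)=\sum_{j\in S}c_{i,j}$. The set of general instances is $\mathcal{C}=\mathbb{R}_{\ge0}^{m\times n}$. An allocation is a tuple $(X_1,\dots,X_m)$ of pairwise disjoint subsets of $[n]$ whose union is $[n]$. A mechanism $(A,p)$ over a set of instances $\mathcal{I}$ assigns to each $c\in\mathcal{I}$ an allocation $A(c)$ and payments $p(c)\in\mathbb{R}^m$ (written $A_i,p_i$). The mechanism is proportional if for every $c\in\mathcal{I}$ and $i\in[m]$: $c_i(A_i)-p_i\le \frac1m\sum_{j\in[m]}(c_i(A_j)-p_j)$. $\mathrm{OPT}(c)=\min_X\max_{i\in[m]}c_i(X_i)$ over all allocations $X$. An allocation function $A$ gives a $\beta$-approximation to the optimal makespan if $\max_{i}c_i(A(c)_i)\le\beta\,\mathrm{OPT}(c)$ for all $c\in\mathcal{I}$. *)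

(* Defs.v *)
From mathcomp Require Import all_boot all_order all_algebra.
From mathcomp Require Import reals.
Set Implicit Arguments. Unset Strict Implicit. Unset Printing Implicit Defensive.
Import Order.TTheory GRing.Theory Num.Theory.
Local Open Scope ring_scope.

Section Sched.
Variables (R : realType) (m n : nat).

(* An instance: c i j = cost of job j on machine i. *)
Definition instance := 'M[R]_(m, n).
Definition general_instance (c : instance) : Prop := forall i j, 0 <= c i j.

(* An allocation (X_1,..,X_m), pairwise disjoint, union [n], is encoded
   by the function sending each job to the machine it is assigned to;
   X_i = [set j | X j == i]. *)
Definition allocation := {ffun 'I_n -> 'I_m}.
Definition bundle (X : allocation) (i : 'I_m) : {set 'I_n} := [set j | X j == i].

Definition cost (c : instance) (i : 'I_m) (S : {set 'I_n}) : R :=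
  \sum_(j in S) c i j.

Definition makespan (c : instance) (X : allocation) : R :=
  \big[Num.max/0]_(i < m) cost c i (bundle X i).

Definition alloc_fun := instance -> allocation.
Definition pay_fun := instance -> 'I_m -> R.

Definition proportional (A : alloc_fun) (p : pay_fun) : Prop :=
  forall c, general_instance c -> forall i : 'I_m,
    cost c i (bundle (A c) i) - p c i <=
    m%:R^-1 * \sum_(k < m) (cost c i (bundle (A c) k) - p c k).

Definition OPT (c : instance) (X0 : allocation) : R :=
  \big[Num.min/makespan c X0]_(X : allocation) makespan c X.

Definition approximates (beta : R) (A : alloc_fun) : Prop :=
  forall c, general_instance c ->
    forall X0 : allocation, makespan c (A c) <= beta * OPT c X0.

End Sched.

(* Main.v *)
Require Import Defs.
From mathcomp Require Import all_boot all_order all_algebra.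
From mathcomp Require Import reals.
From mathcomp Require Import ring lra zify.
Import Order.TTheory GRing.Theory Num.Theory.
Local Open Scope ring_scope.

Section Aux.
Variables (R : realType) (m n : nat) (Hm : (2 <= m)%N) (Hn : (m <= n)%N)
  (eps : R) (Heps0 : 0 < eps) (Heps1 : eps <= 1 / 2).
Ltac gen := move: (eps) Heps0 Heps1 => e H0 H1.
Ltac gen2 := move: (m) (eps) Heps0 Heps1 => mm e H0 H1.

Definition f (i j : nat) : R :=
  if (j < m)%N then (if i == j then 1 else if (j < i)%N then 3/2 - eps/2
                     else 1/2 - eps/2) else 0.

Definition cc : instance R m n := \matrix_(i, j) f i j.

Lemma f_ge0 i j : 0 <= f i j.
Proof. rewrite /f; case: ifP => // _; case: ifP => // _; case: ifP => _; gen; lra. Qed.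

Lemma cc_gen : general_instance cc.
Proof. by move=> i j; rewrite mxE f_ge0. Qed.

Definition jo (i : 'I_m) : 'I_n := Ordinal (leq_trans (ltn_ord i) Hn).

Lemma cost_ge1 (X : allocation m n) i j : X j = i -> cc i j <= cost cc i (bundle X i).
Proof.
move=> Hj; rewrite /cost (bigD1 j) /=; last by rewrite inE Hj.
rewrite lerDl; apply: sumr_ge0 => k _; by rewrite mxE f_ge0.
Qed.

Lemma cost_ge2 (X : allocation m n) i j k : X j = i -> X k = i -> j != k ->
  cc i j + cc i k <= cost cc i (bundle X i).
Proof.
move=> Hj Hk Hjk; rewrite /cost (bigD1 j) /=; last by rewrite inE Hj.
rewrite (bigD1 k) /=; last by rewrite inE Hk eqxx eq_sym Hjk.
rewrite addrA lerDl; apply: sumr_ge0 => l _; by rewrite mxE f_ge0.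
Qed.

Lemma forced (X : allocation m n) :
  (forall i, cost cc i (bundle X i) <= 3/2 - eps) ->
  forall j : 'I_n, (j < m)%N -> val (X j) = val j.
Proof.
move=> Hb j; move Ek: (val j) => k; elim/ltn_ind: k j Ek => k IH j Ek Hk.
have := Hb (X j); case: (ltngtP (X j) k) => // Hlt.
- have Hji : X (jo (X j)) = X j.
    by apply: val_inj; apply: (IH (X j)) => //; rewrite /= ltn_ord.
  have Hne : jo (X j) != j.
    by apply/eqP => /(congr1 val) /= E; move: Hlt; rewrite -Ek; change ((nat_of_ord (X j) < nat_of_ord j)%N -> False); rewrite -E ltnn.
  have := cost_ge2 _ _ _ _ Hji (erefl (X j)) Hne.
  have Hk2 : (k < m)%N by rewrite -Ek.
  rewrite !mxE /f /= ltn_ord Ek Hk2 eqxx.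
  rewrite (ltn_eqF Hlt) (ltnNge k) (ltnW Hlt) /=; move=> Ha Hb2; exfalso; move: Ha Hb2; gen; lra.
- have Hk2 : (k < m)%N by rewrite -Ek.
  have := cost_ge1 _ _ _ (erefl (X j)); rewrite !mxE /f Ek Hk2 (gtn_eqF Hlt) Hlt.
  move=> Ha Hb2; exfalso; move: Ha Hb2; gen; lra.
Qed.

Lemma cost_id (X : allocation m n) :
  (forall j : 'I_n, (j < m)%N -> val (X j) = val j) ->
  forall i, cost cc i (bundle X i) = 1.
Proof.
move=> HX i; have Hi : X (jo i) = i by apply: val_inj; rewrite HX /= ?ltn_ord.
rewrite /cost (bigD1 (jo i)) /=; last by rewrite inE Hi.
rewrite big1 ?addr0; first by rewrite mxE /f /= ltn_ord eqxx.
move=> j; rewrite inE => /andP[/eqP Hj Hne]; rewrite mxE /f.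
case: ifP => // Hjm; exfalso; move/negP: Hne; apply; apply/eqP/val_inj.
by rewrite /= -(HX j Hjm) Hj.
Qed.

Definition X0 : allocation m n := [ffun j => insubd (Ordinal (leq_trans (isT : (0 < 2)%N) Hm)) (val j)].

Lemma X0_id : forall j : 'I_n, (j < m)%N -> val (X0 j) = val j.
Proof. by move=> j Hj; rewrite ffunE val_insubd Hj. Qed.

Lemma OPT_le1 : OPT cc X0 <= 1.
Proof.
have H : makespan cc X0 <= 1.
  rewrite /makespan; elim/big_rec: _ => [|i x _ Hx]; first lra.
  by rewrite ge_max Hx cost_id ?lexx //; apply: X0_id.
apply: le_trans H; rewrite /OPT; elim/big_rec: _ => [|X x _ Hx] //.
by rewrite ge_min Hx orbT.
Qed.

Lemma rowsum (X : allocation m n) (i : 'I_m) :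
  \sum_(k < m) cost cc i (bundle X k) = \sum_(j < m) f i j.
Proof.
rewrite /cost.
rewrite (eq_bigr (fun k => \sum_(j | X j == k) cc i j)); last first.
  by move=> k _; apply: eq_bigl => j; rewrite inE.
transitivity (\sum_(j < n) cc i j); first by rewrite (partition_big X predT).
rewrite (big_ord_widen _ (fun j => f i j) Hn) [RHS]big_mkcond /=.
by apply: eq_bigr => j _; rewrite mxE /f; case: ifP.
Qed.

Lemma total_lt : \sum_(i < m) \sum_(j < m) f i j < (m%:R) ^+ 2.
Proof.
have Hsym : forall i j : 'I_m, f i j + f j i <= 2 - eps + eps * (i == j)%:R.
  move=> i j; rewrite /f !ltn_ord.
  case: (ltngtP i j) => H.
  - have -> : (i == j :> 'I_m) = false by apply/eqP => E; move: H; rewrite E ltnn.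
    rewrite mulr0; gen; lra.
  - have -> : (i == j :> 'I_m) = false by apply/eqP => E; move: H; rewrite E ltnn.
    rewrite mulr0; gen; lra.
  - have -> : (i == j :> 'I_m) = true by apply/eqP/val_inj.
    rewrite mulr1; gen; lra.
have E : \sum_(i < m) \sum_(j < m) (f i j + f j i) =
         \sum_(i < m) \sum_(j < m) f i j + \sum_(i < m) \sum_(j < m) f i j.
  under eq_bigr do rewrite big_split /=.
  by rewrite big_split /= [X in _ + X = _]exchange_big.
have Hle : \sum_(i < m) \sum_(j < m) (f i j + f j i) <=
           \sum_(i < m) \sum_(j < m) (2 - eps + eps * (i == j)%:R).
  by apply: ler_sum => i _; apply: ler_sum => j _; apply: Hsym.
have Hin : forall i : 'I_m, \sum_(j < m) (2 - eps + eps * (i == j)%:R) = (2 - eps) * m%:R + eps.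
  move=> i; rewrite big_split /= sumr_const card_ord (bigD1 i) //= eqxx big1.
    by rewrite mulr1 addr0 mulr_natr.
  by move=> j Hj; rewrite eq_sym (negbTE Hj) mulr0.
rewrite (eq_bigr _ (fun i _ => Hin i)) sumr_const card_ord in Hle.
rewrite E -[_ *+ m]mulr_natr in Hle.
have Hm2 : (2 : R) <= m%:R by rewrite (ler_nat R 2 m).
move: Hle Hm2; move: (\sum_(i < m) \sum_(j < m) f i j) => S.
gen2 => H2 H3.
have h : 0 < e * (mm%:R * (mm%:R - 1)) by apply: mulr_gt0 => //; apply: mulr_gt0; lra.
nra.
Qed.

End Aux.

Theorem theorem2 (R : realType) (m n : nat) (Hm : (2 <= m)%N) (Hn : (m <= n)%N)
  (eps : R) (Heps0 : 0 < eps) (Heps1 : eps <= 1 / 2) :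
  ~ exists (A : alloc_fun R m n) (p : pay_fun R m n),
      proportional A p /\ approximates (3 / 2 - eps) A.
Proof.
move=> [A [p [Hprop Happ]]].
set c := cc R m n eps.
have Hg : general_instance c := @cc_gen R m n eps Heps0 Heps1.
have Hmk := Happ c Hg (X0 m n Hm).
have Hb : forall i, cost c i (bundle (A c) i) <= 3/2 - eps.
  move=> i; apply: le_trans (_ : makespan c (A c) <= _); last first.
    apply: (le_trans Hmk); rewrite -[X in _ <= X]mulr1 ler_wpM2l //.
      lra.
    exact: (@OPT_le1 R m n Hm Hn eps).
  rewrite /makespan; exact: (le_bigmax _ (fun k => cost c k (bundle (A c) k)) i).
have Hid := @forced R m n Hn eps Heps0 Heps1 (A c) Hb.
have Hc := @cost_id R m n Hn eps (A c) Hid.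
have Hsum : \sum_(i < m) (cost c i (bundle (A c) i) - p c i) <=
   \sum_(i < m) (m%:R^-1 * \sum_(k < m) (cost c i (bundle (A c) k) - p c k)).
  by apply: ler_sum => i _; apply: Hprop.
have Hm0 : (0 : R) < m%:R by rewrite ltr0n (leq_trans _ Hm).
move: Hsum.
under eq_bigr do rewrite Hc.
under [X in _ <= X]eq_bigr do rewrite sumrB (@rowsum R m n Hn eps).
rewrite -mulr_sumr sumrB sumr_const card_ord sumrB sumr_const card_ord.
have := @total_lt R m Hm eps Heps0 Heps1.
move: (\sum_(i < m) \sum_(j < m) f R m eps i j) => S.
move: (\sum_(i < m) p c i) => P.
rewrite -[P *+ m]mulr_natr => HS H.
have H2 : m%:R * (m%:R - P) <= m%:R * (m%:R^-1 * (S - P * m%:R)).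
  exact: (ler_wpM2l (ltW Hm0) H).
rewrite mulrA mulfV ?gt_eqF // mul1r in H2.
move: HS H2 Hm0; move: (m%:R : R) => M; move=> *; nra.
Qed.
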